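(* Let $f_1,\ldots,f_{KN}$ be drawn i.i.d. from a distribution $\mathcal{F}$ over types, let $\widehat{p}(\mathbf{b}^{(i)})=\frac1N\sum_{\tau=1}^N\mathbb{1}\{b_{f_{(i-1)N+\tau}}(\mathbf{x}^{(\mathbf{b}^{(i)})})=a^{(\mathbf{b}^{(i)})}\}$ for $i\in[K]$, and $\widehat{p}(\mathbf{w})=\sum_{i=1}^K\lambda_i(\mathbf{w})\widehat{p}(\mathbf{b}^{(i)})$ for $\mathbf{w}\in\mathcal{W}$. Let $p(\mathbf{w})=\sum_{i=1}^K\mathbf{w}[i]\Pr_{f\sim\mathcal{F}}(f=\alpha^{(i)})$. Then for any sequence of mixed strategies $\mathbf{x}_{NK+1},\ldots,\mathbf{x}_T$, with probability at least $1-\frac1T$, $$\sum_{t=NK+1}^T\sum_{a_f\in\mathcal{A}_f}\big|\widehat{p}(\mathbb{1}_{(\sigma^{(\mathbf{x}_t)}=a_f)})-p(\mathbb{1}_{(\sigma^{(\mathbf{x}_t)}=a_f)})\big|\le 2A_fT\sqrt{\frac{K\log T}{N}}.$$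
   Context: Finite leader actions $\mathcal{A}$, finite follower actions $\mathcal{A}_f$ with $A_f=|\mathcal{A}_f|$, follower types $\alpha^{(1)},\ldots,\alpha^{(K)}$ with context-independent utilities $u_{\alpha^{(i)}}:\mathcal{A}\times\mathcal{A}_f\to[0,1]$; for $\mathbf{x}\in\Delta(\mathcal{A})$, $b_f(\mathbf{x})\in\arg\max_{a_f}\sum_{a_l}\mathbf{x}[a_l]u_f(a_l,a_f)$, ties broken by a fixed ordering. $\sigma^{(\mathbf{x})}$ maps $\alpha^{(i)}\mapsto b_{\alpha^{(i)}}(\mathbf{x})$; $\Sigma=\{\sigma^{(\mathbf{x})}\}$. For $\sigma\in\Sigma$, $a_f\in\mathcal{A}_f$, $\mathbb{1}_{(\sigma=a_f)}\in\{0,1\}^K$ has $i$-th entry $\mathbb{1}\{\sigma(\alpha^{(i)})=a_f\}$; $\mathcal{W}$ is the set of these vectors. $\mathcal{B}=\{\mathbf{b}^{(1)},\ldots,\mathbf{b}^{(K)}\}\subseteq\mathcal{W}$ is a barycentric spanner (each $\mathbf{w}\in\mathcal{W}$ equals $\sum_i\lambda_i(\mathbf{w})\mathbf{b}^{(i)}$ with $\lambda_i(\mathbf{w})\in[-1,1]$), and $\mathbf{x}^{(\mathbf{b})},a^{(\mathbf{b})}$ satisfy $\mathbf{b}=\mathbb{1}_{(\sigma^{(\mathbf{x}^{(\mathbf{b})})}=a^{(\mathbf{b})})}$. Here $T\ge KN$. *)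

(* Defs.v *)
From HB Require Import structures.
From mathcomp Require Import all_boot all_order all_algebra.
From mathcomp Require Import all_classical all_reals.
From mathcomp Require Import exp.
Set Implicit Arguments. Unset Strict Implicit. Unset Printing Implicit Defensive.
Import Order.TTheory GRing.Theory Num.Theory.
Local Open Scope ring_scope.

Section Defs.
Variables (R : realType) (AL : finType) (nf : nat).
(* follower actions: 'I_nf.+1, so A_f = nf.+1; the fixed tie-breaking ordering
   is the natural order of 'I_nf.+1 *)

Definition is_mixed (x : AL -> R) : Prop :=
  (forall a, 0 <= x a) /\ \sum_(a : AL) x a = 1.

Definition exp_util (u : AL -> 'I_nf.+1 -> R) (x : AL -> R) (af : 'I_nf.+1) : R :=
  \sum_(al : AL) x al * u al af.

Definition best_resp (u : AL -> 'I_nf.+1 -> R) (x : AL -> R) : 'I_nf.+1 :=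
  let s := enum 'I_nf.+1 in
  nth ord0 s
    (find (fun af => [forall af', exp_util u x af' <= exp_util u x af]) s).

(* the vector 1_{(sigma^(x) = af)} in {0,1}^K, for K follower types *)
Definition ind_vec (K : nat) (u : 'I_K -> AL -> 'I_nf.+1 -> R)
  (x : AL -> R) (af : 'I_nf.+1) : {ffun 'I_K -> bool} :=
  [ffun i => best_resp (u i) x == af].

(* probability of an event under KN i.i.d. draws from q over the K types;
   samples indexed by (i, tau) in [K] x [N], i.e. sample number (i-1)N+tau *)
Definition iid_prob (K N : nat) (q : 'I_K -> R)
  (E : {ffun 'I_K * 'I_N -> 'I_K} -> bool) : R :=
  \sum_(f : {ffun 'I_K * 'I_N -> 'I_K} | E f) \prod_(j : 'I_K * 'I_N) q (f j).

End Defs.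

(* Main.v *)
Require Import Defs.
From HB Require Import structures.
From mathcomp Require Import all_boot all_order all_algebra.
From mathcomp Require Import all_classical all_reals all_analysis.
From mathcomp Require Import ring lra zify.
Import Order.TTheory GRing.Theory Num.Theory.
Import numFieldNormedType.Exports.
Local Open Scope ring_scope.

Section Hoeff.
Variable R : realType.

Lemma mvt_all (f df : R -> R) (a b : R) : a <= b ->
  (forall x : R, is_derive x (1:R) f (df x)) ->
  exists2 c, a <= c <= b & f b - f a = df c * (b - a).
Proof.
move=> ab fd.
have [|c cab ->] := MVT_segment ab (fun x _ => fd x).
  apply/continuous_subspaceT=> r.
  by apply/differentiable_continuous/derivable1_diffP; case: (fd r).
by exists c => //; move: cab; rewrite in_itv.
Qed.

Variable p : R.
Hypothesis p01 : 0 <= p <= 1.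

Let M (y : R) := 1 - p + p * expR y.

Lemma M_gt0 y : 0 < M y.
Proof.
case/andP: p01 => p0 p1; rewrite /M.
have [->|pp] := eqVneq p 0; first by rewrite subr0 mul0r addr0.
have : 0 < p * expR y by rewrite mulr_gt0 ?expR_gt0 // lt_def pp p0.
by move=> h; rewrite ltr_wpDl // subr_ge0.
Qed.

Lemma dM (x : R) : is_derive x (1:R) M (p * expR x).
Proof.
rewrite /M.
have -> : (fun y => 1 - p + p * expR y) = cst (1 - p) + (p \*: expR) :> (R -> R).
  by apply/funext => y.
by apply: is_derive_eq; rewrite add0r.
Qed.


Let u (y : R) := p * expR y / M y.

Lemma du (x : R) : is_derive x (1:R) u (u x * (1 - u x)).
Proof.
have hV := is_deriveV (lt0r_neq0 (M_gt0 x)) (dM x).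
rewrite {1}(_ : u = (p \*: expR) * (fun y => (M y)^-1) :> (R -> R)); last first.
  by apply/funext => y.
apply: is_derive_eq.
have m0 : M x != 0 by exact: lt0r_neq0 (M_gt0 x).
by rewrite /= /GRing.scale /u /=; field.
Qed.

Let psi (y : R) := u y - p - y / 4.

Lemma dpsi (x : R) : is_derive x (1:R) psi (u x * (1 - u x) - 4^-1).
Proof.
have hu := du x.
rewrite {1}(_ : psi = u - cst p - ( 4^-1 \*: id) :> (R -> R)); last first.
  by apply/funext => y; rewrite /psi /= mulrC.
apply: is_derive_eq.
by rewrite subr0 /GRing.scale /= mulr1.
Qed.

Let phi (y : R) := ln (M y) - y * p - y ^+ 2 / 8.

Lemma dphi (x : R) : is_derive x (1:R) phi (psi x).
Proof.
have hl : is_derive x (1:R) (@ln R \o M) ((M x)^-1 * (p * expR x)).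
  apply: is_derive1_comp; last exact: dM.
  exact: is_derive1_ln (M_gt0 x).
rewrite {1}(_ : phi = (@ln R \o M) - (p \*: id) - (8^-1 \*: (id ^+ 2)) :> (R -> R)); last first.
  by apply/funext => y; rewrite /phi /= [y * p]mulrC [_ / 8]mulrC.
apply: is_derive_eq.
have m0 : M x != 0 by exact: lt0r_neq0 (M_gt0 x).
by rewrite /psi /u /GRing.scale /= !mulr1 expr1; field.
Qed.


Lemma M0 : M 0 = 1.
Proof. by rewrite /M expR0 mulr1 subrK. Qed.

Lemma psi0 : psi 0 = 0.
Proof. by rewrite /psi /u M0 expR0 mulr1 divr1 subrr mul0r subr0. Qed.

Lemma dpsi_le0 (c : R) : u c * (1 - u c) - 4^-1 <= 0.
Proof. have := sqr_ge0 (u c - 2^-1); rewrite expr2 => h. nra. Qed.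

Lemma psi_nonpos (y : R) : 0 <= y -> psi y <= 0.
Proof.
move=> y0; have [c _ e] := @mvt_all psi (fun c => u c * (1 - u c) - 4^-1) _ _ y0 dpsi.
rewrite psi0 subr0 in e; rewrite e subr0.
by rewrite mulr_le0_ge0 // dpsi_le0.
Qed.

Lemma psi_nonneg (y : R) : y <= 0 -> 0 <= psi y.
Proof.
move=> y0; have [c _ e] := @mvt_all psi (fun c => u c * (1 - u c) - 4^-1) _ _ y0 dpsi.
rewrite psi0 sub0r in e.
rewrite -oppr_le0 e; apply: mulr_le0_ge0; first exact: dpsi_le0.
by rewrite sub0r oppr_ge0.
Qed.

Lemma phi0 : phi 0 = 0.
Proof. by rewrite /phi M0 ln1 mul0r expr0n /= mul0r !subr0. Qed.

Lemma phi_le0 (y : R) : phi y <= 0.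
Proof.
have [y0|y0] := leP 0 y.
  have [c /andP[c0 cy] e] := @mvt_all phi psi _ _ y0 dphi.
  rewrite phi0 subr0 subr0 in e; rewrite e.
  by rewrite mulr_le0_ge0 // psi_nonpos.
have [c /andP[c0 cy] e] := @mvt_all phi psi _ _ (ltW y0) dphi.
rewrite phi0 sub0r in e.
rewrite -oppr_ge0 e; apply: mulr_ge0; first exact: psi_nonneg.
by rewrite sub0r oppr_ge0 ltW.
Qed.

Lemma hoeffding_bern (h : R) :
  (1 - p) * expR (- (h * p)) + p * expR (h * (1 - p)) <= expR (h ^+ 2 / 8).
Proof.
have e : (1 - p) * expR (- (h * p)) + p * expR (h * (1 - p)) = expR (- (h * p)) * M h.
  have -> : expR (h * (1 - p)) = expR (- (h * p)) * expR h.
    by rewrite -expRD; congr expR; ring.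
  rewrite /M; ring.
rewrite e; have := phi_le0 h; rewrite /phi => hp.
have : ln (M h) <= h * p + h ^+ 2 / 8 by lra.
rewrite -ler_expR lnK; last by rewrite posrE M_gt0.
move=> hM.
have -> : expR (h ^+ 2 / 8) = expR (- (h * p)) * expR (h * p + h ^+ 2 / 8).
  by rewrite -expRD; congr expR; ring.
by rewrite ler_pM2l ?expR_gt0.
Qed.

End Hoeff.

Section Prob.
Variables (R : realType) (K N : nat) (q : 'I_K -> R).
Hypothesis q0 : forall i, 0 <= q i.
Hypothesis q1 : \sum_(i < K) q i = 1.

Local Notation Om := {ffun 'I_K * 'I_N -> 'I_K}.
Let P (f : Om) := \prod_(j : 'I_K * 'I_N) q (f j).

Lemma P_ge0 f : 0 <= P f.
Proof. by apply: prodr_ge0 => j _; apply: q0. Qed.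

Lemma fact_sum (g : 'I_K * 'I_N -> 'I_K -> R) :
  \sum_(f : Om) \prod_j (q (f j) * g j (f j)) = \prod_j \sum_k q k * g j k.
Proof. by rewrite (bigA_distr_bigA (fun j k => q k * g j k)). Qed.

Lemma P_total : \sum_(f : Om) P f = 1.
Proof.
transitivity (\prod_(j : 'I_K * 'I_N) \sum_k q k * 1).
  rewrite -(fact_sum (fun _ _ => 1)); apply: eq_bigr => f _.
  by apply: eq_bigr => j _; rewrite mulr1.
by rewrite big1 // => j _; under eq_bigr do rewrite mulr1; rewrite q1.
Qed.

Lemma iid_prob_ge0 (E : Om -> bool) : 0 <= iid_prob q E.
Proof. by apply: sumr_ge0 => f _; apply: P_ge0. Qed.

Lemma iid_prob_sub (E1 E2 : Om -> bool) :
  (forall f, E1 f -> E2 f) -> iid_prob q E1 <= iid_prob q E2.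
Proof.
move=> h; rewrite /iid_prob [X in _ <= X](bigID E1) /=.
rewrite [\sum_(i | E2 i && E1 i) _](eq_bigl E1); last first.
  by move=> f; case e: (E1 f); rewrite ?andbF ?andbT // h.
by rewrite lerDl; apply: sumr_ge0 => f _; apply: P_ge0.
Qed.

Lemma iid_prob_compl (E : Om -> bool) :
  iid_prob q E = 1 - iid_prob q (fun f => ~~ E f).
Proof.
rewrite /iid_prob -[X in _ = X - _]P_total /P [X in _ = X - _](bigID E) /=.
by rewrite addrK.
Qed.

Lemma iid_prob_union (I : finType) (B : I -> Om -> bool) :
  iid_prob q (fun f => [exists i, B i f]) <= \sum_(i : I) iid_prob q (B i).
Proof.
rewrite /iid_prob.
rewrite [X in _ <= X](eq_bigr (fun i => \sum_(f : Om) (if B i f then P f else 0))); last first.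
  by move=> i _; rewrite big_mkcond.
rewrite exchange_big /= [X in X <= _]big_mkcond /=.
apply: ler_sum => f _; case: ifP => [/existsP [i0 Bi0]|_]; last first.
  by apply: sumr_ge0 => i _; case: (B i f) => //; apply: P_ge0.
rewrite (bigD1 i0) //= Bi0 lerDl; apply: sumr_ge0 => i _.
by case: (B i f) => //; apply: P_ge0.
Qed.

Lemma iid_prob_or (E1 E2 : Om -> bool) :
  iid_prob q (fun f => E1 f || E2 f) <= iid_prob q E1 + iid_prob q E2.
Proof.
rewrite /iid_prob [X in X <= _](bigID E1) /= lerD //.
  by apply: iid_prob_sub => f /andP[].
apply: iid_prob_sub => f /andP[] /orP[->|//]. by [].
Qed.


Lemma iid_prob_sub_or (E E1 E2 : Om -> bool) :
  (forall f, E f -> E1 f || E2 f) -> iid_prob q E <= iid_prob q E1 + iid_prob q E2.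
Proof.
move=> h; apply: (le_trans _ (iid_prob_or E1 E2)).
exact: iid_prob_sub.
Qed.

Lemma hoeffding_sum (Y : 'I_K -> 'I_K -> bool) (c : 'I_K -> R) (eps : R) :
  (0 < K)%N -> (0 < N)%N -> 0 <= eps -> (forall i, `|c i| <= 1) ->
  iid_prob q (fun f : Om => eps < \sum_(i < K) c i *
      (N%:R^-1 * \sum_(tau < N) ((Y i (f (i, tau)) : nat)%:R) -
       \sum_(k < K) q k * ((Y i k : nat)%:R)))
   <= expR (- (2 * N%:R * eps ^+ 2 / K%:R)).
Proof.
move=> K0 N0 e0 c1.
set pY := fun i => \sum_(k < K) q k * ((Y i k : nat)%:R).
set X := fun f : Om => \sum_(i < K) c i * (N%:R^-1 * \sum_(tau < N) ((Y i (f (i, tau)) : nat)%:R) - pY i).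
have Kn0 : (K%:R : R) != 0 by rewrite pnatr_eq0 -lt0n.
have Nn0 : (N%:R : R) != 0 by rewrite pnatr_eq0 -lt0n.
have Kp : (0 : R) < K%:R by rewrite ltr0n.
have Np : (0 : R) < N%:R by rewrite ltr0n.
pose s := 4 * N%:R * eps / K%:R.
have s0 : 0 <= s by rewrite /s !mulr_ge0 ?invr_ge0 ?ler0n.
pose g (j : 'I_K * 'I_N) (k : 'I_K) := c j.1 * N%:R^-1 * ((Y j.1 k : nat)%:R - pY j.1).
have Xg f : X f = \sum_(j : 'I_K * 'I_N) g j (f j).
  rewrite (_ : \sum_(j : 'I_K * 'I_N) g j (f j) = \sum_(i < K) \sum_(tau < N) g (i, tau) (f (i, tau))); last first.
    by rewrite pair_bigA; apply: eq_bigr => -[i t].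
  rewrite /X.
  apply: eq_bigr => i _; rewrite /g /= -mulr_sumr sumrB sumr_const card_ord.
  by rewrite -mulr_natr; field.
apply: (@le_trans _ _ (\sum_(f : Om) P f * expR (s * (X f - eps)))).
  rewrite /iid_prob big_mkcond /=; apply: ler_sum => f _.
  case: ifP => [lt|_]; last by rewrite mulr_ge0 ?P_ge0 ?expR_ge0.
  rewrite -[X in X <= _]mulr1 ler_wpM2l ?P_ge0 //.
  apply: le_trans (expR_ge1Dx _); rewrite lerDl mulr_ge0 // subr_ge0 ltW //.
have -> : \sum_(f : Om) P f * expR (s * (X f - eps)) =
   expR (- (s * eps)) * \prod_(j : 'I_K * 'I_N) \sum_k q k * expR (s * g j k).
  rewrite -fact_sum mulr_sumr; apply: eq_bigr => f _.
  rewrite Xg mulrBr expRD mulrCA mulr_sumr expR_sum /P. rewrite big_split /=; ring.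
pose a := s ^+ 2 / (8 * N%:R ^+ 2).
have fac j : 0 <= \sum_k q k * expR (s * g j k) <= expR a.
  apply/andP; split; first by apply: sumr_ge0 => k _; rewrite mulr_ge0 ?expR_ge0.
  set h := s * c j.1 * N%:R^-1.
  have pYe : pY j.1 = \sum_(k | Y j.1 k) q k.
    rewrite /pY (bigID (fun k => Y j.1 k)) /= [X in _ + X]big1 ?addr0.
      by apply: eq_bigr => k ->; rewrite mulr1.
    by move=> k /negbTE ->; rewrite mulr0.
  have pYc : \sum_(k | ~~ Y j.1 k) q k = 1 - pY j.1.
    have := q1; rewrite (bigID (fun k => Y j.1 k)) /= -pYe => hq.
    by rewrite -hq [pY j.1 + _]addrC addrK.
  have pY01 : 0 <= pY j.1 <= 1.
    apply/andP; split; first by rewrite pYe sumr_ge0.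
    by rewrite -q1 pYe [X in _ <= X](bigID (fun k => Y j.1 k)) /= lerDl sumr_ge0.
  rewrite (bigID (fun k => Y j.1 k)) /=.
  rewrite (eq_bigr (fun k => q k * expR (h * (1 - pY j.1)))); last first.
    move=> k Yk; rewrite /g Yk /h; congr (_ * expR _). rewrite (_ : (true : nat)%:R = 1 :> R) //; ring.
  rewrite [X in _ + X](eq_bigr (fun k => q k * expR (- (h * pY j.1)))); last first.
    by move=> k /negbTE Yk; rewrite /g Yk /h; congr (_ * expR _); rewrite (_ : (false : nat)%:R = 0 :> R) //; ring.
  rewrite -!mulr_suml -pYe pYc addrC.
  apply: le_trans (@hoeffding_bern _ _ pY01 h) _.
  rewrite ler_expR.
  have cc : c j.1 ^+ 2 <= 1.
    by rewrite -real_normK ?num_real // expr_le1 // normr_ge0.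
  have -> : h ^+ 2 / 8 = c j.1 ^+ 2 * a by rewrite /h /a; field.
  have a0 : 0 <= a by rewrite /a mulr_ge0 ?sqr_ge0 // invr_ge0 mulr_ge0 ?sqr_ge0.
  by rewrite -[X in _ <= X]mul1r ler_wpM2r.
apply: (@le_trans _ _ (expR (- (s * eps)) * \prod_(j : 'I_K * 'I_N) expR a)).
  by rewrite ler_wpM2l ?expR_ge0 //; apply: ler_prod => j _; exact: fac.
rewrite prodr_const card_prod !card_ord -expRM_natl -expRD ler_expR.
rewrite le_eqVlt; apply/orP; left; apply/eqP.
by rewrite /a /s natrM; field; rewrite Kn0 Nn0.
Qed.

End Prob.

Lemma nat_bound (T K : nat) : (2 <= T)%N -> (K <= T)%N -> ((T.+1 * K.+1) * 2 <= T ^ 7)%N.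
Proof.
move=> T2 KT.
have h5 : (2 ^ 5 <= T ^ 5)%N by rewrite leq_exp2r.
rewrite (_ : 7 = 5 + 2)%N // expnD.
move: h5; set a := (T ^ 5)%N => h5.
have h2 : (T ^ 2 = T * T)%N by [].
rewrite h2; nia.
Qed.

Section Main.
Variables (R : realType) (AL : finType) (nf K N T : nat)
  (u : 'I_K -> AL -> 'I_nf.+1 -> R)
  (q : 'I_K -> R)
  (xb : 'I_K -> AL -> R) (ab : 'I_K -> 'I_nf.+1)
  (lam : {ffun 'I_K -> bool} -> 'I_K -> R)
  (xs : nat -> AL -> R).
Hypothesis hu : forall i al af, 0 <= u i al af <= 1.
Hypothesis hq0 : forall i, 0 <= q i.
Hypothesis hq1 : \sum_(i < K) q i = 1.
Hypothesis hxb : forall i, is_mixed (xb i).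
Hypothesis hlam : forall x af, is_mixed x ->
     (forall i, -1 <= lam (ind_vec u x af) i <= 1) /\
     (forall j, ((ind_vec u x af j : nat)%:R : R) =
        \sum_(i < K) lam (ind_vec u x af) i * ((ind_vec u (xb i) (ab i) j : nat)%:R)).
Hypothesis N0 : (0 < N)%N.
Hypothesis KNT : (K * N <= T)%N.
Hypothesis hxs : forall t, is_mixed (xs t).

Definition phat_b (f : {ffun 'I_K * 'I_N -> 'I_K}) (i : 'I_K) : R :=
    N%:R^-1 * \sum_(tau < N)
      ((best_resp (u (f (i, tau))) (xb i) == ab i : nat)%:R).
Definition phat f (w : {ffun 'I_K -> bool}) : R := \sum_(i < K) lam w i * phat_b f i.
Definition pw (w : {ffun 'I_K -> bool}) : R := \sum_(i < K) (w i : nat)%:R * q i.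

Lemma main_aux :
  iid_prob q (fun f =>
    \sum_((K * N).+1 <= t < T.+1) \sum_(af : 'I_nf.+1)
        `|phat f (ind_vec u (xs t) af) - pw (ind_vec u (xs t) af)|
      <= 2 * (nf.+1)%:R * T%:R * Num.sqrt (K%:R * ln (T%:R : R) / N%:R))
  >= 1 - T%:R^-1.
Proof.
set eps := 2 * Num.sqrt (K%:R * ln (T%:R : R) / N%:R).
have e0 : 0 <= eps by rewrite /eps mulr_ge0 ?sqrtr_ge0.
pose Y i k := best_resp (u k) (xb i) == ab i.
pose pY i := \sum_(k < K) q k * ((Y i k : nat)%:R).
have key x af f : is_mixed x ->
    phat f (ind_vec u x af) - pw (ind_vec u x af) =
    \sum_(i < K) lam (ind_vec u x af) i *
      (N%:R^-1 * \sum_(tau < N) ((Y i (f (i, tau)) : nat)%:R) - pY i).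
  move=> mx; have [_ hsp] := hlam x af mx.
  rewrite /phat /pw.
  under [X in _ - X]eq_bigr => j _ do rewrite hsp mulr_suml.
  rewrite exchange_big /= -sumrB; apply: eq_bigr => i _.
  rewrite mulrBr /phat_b; congr (_ - _).
  rewrite /pY mulr_sumr; apply: eq_bigr => k _; rewrite ffunE; ring.
pose aft (t : nat) (o : option 'I_K) : 'I_nf.+1 :=
  if o is Some i then best_resp (u i) (xs t)
  else odflt ord0 [pick af | ind_vec u (xs t) af == [ffun => false]].
have covr t af : exists o, ind_vec u (xs t) af = ind_vec u (xs t) (aft t o).
  case: (pickP (fun i => best_resp (u i) (xs t) == af)) => [i /eqP hi | hnone].
    by exists (Some i); rewrite /= hi.
  have z : ind_vec u (xs t) af = [ffun => false].
    by apply/ffunP => i; rewrite !ffunE hnone.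
  exists None; rewrite /= z; case: pickP => [af' /eqP -> // | h].
  by have := h af; rewrite z eqxx.
pose dev t o f := phat f (ind_vec u (xs t) (aft t o)) - pw (ind_vec u (xs t) (aft t o)).
pose B (j : 'I_T.+1 * option 'I_K) (f : {ffun 'I_K * 'I_N -> 'I_K}) :=
  ((K * N < j.1)%N && (eps < `|dev j.1 j.2 f|)).
pose bad f := [exists j, B j f].
have stepA f : ~~ bad f ->
    \sum_((K * N).+1 <= t < T.+1) \sum_(af : 'I_nf.+1)
        `|phat f (ind_vec u (xs t) af) - pw (ind_vec u (xs t) af)|
      <= 2 * (nf.+1)%:R * T%:R * Num.sqrt (K%:R * ln (T%:R : R) / N%:R).
  rewrite negb_exists => /forallP nb.
  have hj t o : (K * N < t <= T)%N -> `|dev t o f| <= eps.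
    case/andP=> lt le; have := nb (inord t, o).
    by rewrite /B /= inordK ?ltnS // lt /= -leNgt.
  have E : \sum_(af < nf.+1) eps = eps *+ nf.+1 by rewrite sumr_const card_ord.
  apply: (@le_trans _ _ (\sum_((K * N).+1 <= t < T.+1) eps *+ nf.+1)).
    apply: ler_sum_nat => t /andP[lt le]; rewrite -E; apply: ler_sum => af _.
    have [oo ->] := covr t af; have h := hj t oo; rewrite /dev in h; apply: h.
    by rewrite lt.
  rewrite sumr_const_nat (subSS (K * N) T) -(mulr_natr eps) -(mulr_natr (eps * _)).
  have -> : 2 * (nf.+1)%:R * T%:R * Num.sqrt (K%:R * ln (T%:R : R) / N%:R) =
     eps * (nf.+1)%:R * T%:R by rewrite /eps; ring.
  by rewrite ler_wpM2l ?mulr_ge0 // ler_nat leq_subr.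
have fls : iid_prob q (fun _ : {ffun 'I_K * 'I_N -> 'I_K} => false) = 0.
  by rewrite /iid_prob big_pred0_eq.
have stepB : iid_prob q bad <= T%:R^-1.
  have [T1|T2] := leqP T 1.
    have [T0|T1'] := posnP T.
      rewrite T0 invr0 -fls; apply: (@iid_prob_sub _ _ _ _ hq0) => f.
      move/existsP => [[t o]] /andP[/= lt _]; have := ltn_ord t.
      lia.
    have -> : T = 1%N by apply/eqP; rewrite eqn_leq T1.
    rewrite invr1 -(@P_total _ _ N _ hq1).
    apply: le_trans (@iid_prob_sub _ _ _ _ hq0 _ (fun _ : {ffun 'I_K * 'I_N -> 'I_K} => true) _) _ => //.
  have Kle : (K <= T)%N by apply: leq_trans KNT; rewrite leq_pmulr.
  have each j : iid_prob q (B j) <= 2 * (T%:R ^+ 8)^-1.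
    have pos8 : 0 <= 2 * (T%:R ^+ 8 : R)^-1 by rewrite mulr_ge0 ?invr_ge0 ?exprn_ge0.
    case: (posnP K) => [K0|Kpos].
      apply: (le_trans _ pos8); rewrite -fls; apply: (@iid_prob_sub _ _ _ _ hq0) => f.
      have z (F : 'I_K -> R) : \sum_(i < K) F i = 0.
        by apply: big1 => -[i hi]; exfalso; lia.
      rewrite /B /dev /phat /pw !z subr0 normr0 ltNge e0.
      by rewrite andbF.
    case: (ltnP (K * N) j.1) => hlt; last first.
      apply: (le_trans _ pos8); rewrite -fls; apply: (@iid_prob_sub _ _ _ _ hq0) => f.
      by rewrite /B ltnNge hlt.
    have [hl _] := hlam (xs j.1) (aft j.1 j.2) (hxs j.1).
    set c := lam (ind_vec u (xs j.1) (aft j.1 j.2)).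
    have c1 i : `|c i| <= 1 by rewrite ler_norml; exact: hl.
    have c1' i : `|(fun i => - c i) i| <= 1 by rewrite /= normrN.
    have H1 := @hoeffding_sum _ _ _ _ hq0 hq1 Y c eps Kpos N0 e0 c1.
    have H2 := @hoeffding_sum _ _ _ _ hq0 hq1 Y (fun i => - c i) eps Kpos N0 e0 c1'.
    have ee : expR (- (2 * N%:R * eps ^+ 2 / K%:R)) = (T%:R ^+ 8)^-1.
      have Tp : (0:R) < T%:R by rewrite ltr0n; apply: leq_trans T2.
      have lnT : 0 <= ln (T%:R : R) by rewrite ln_ge0 // ler1n; apply: ltnW.
      have Kn0 : (K%:R : R) != 0 by rewrite pnatr_eq0 -lt0n.
      have Nn0 : (N%:R : R) != 0 by rewrite pnatr_eq0 -lt0n.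
      have e2 : eps ^+ 2 = 4 * (K%:R * ln (T%:R : R) / N%:R).
        rewrite /eps exprMn sqr_sqrtr; first by ring.
        by rewrite mulr_ge0 ?invr_ge0 ?ler0n // mulr_ge0 ?ler0n.
      have -> : 2 * N%:R * eps ^+ 2 / K%:R = 8%:R * ln (T%:R : R).
        by rewrite e2; field; rewrite Kn0 Nn0.
      by rewrite expRN expRM_natl lnK // posrE.
    rewrite ee in H1 H2.
    apply: (@le_trans _ _ ((T%:R ^+ 8)^-1 + (T%:R ^+ 8)^-1)); last by rewrite mulr_natl mulr2n.
    apply: (le_trans _ (lerD H1 H2)).
    apply: (@iid_prob_sub_or _ _ _ _ hq0) => f /andP[_].
    rewrite /dev key // ltr_normr => /orP[h|h]; apply/orP; [left|right] => //.
    rewrite (_ : \sum_(i < K) _ = - \sum_(i < K) c i * (N%:R^-1 * \sum_(tau < N) ((Y i (f (i, tau)) : nat)%:R) - pY i)) //.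
    by rewrite -sumrN; apply: eq_bigr => i _; rewrite mulNr.
  apply: (le_trans (@iid_prob_union _ _ _ _ hq0 _ B)).
  apply: (le_trans (ler_sum _ (fun j _ => each j))).
  rewrite sumr_const card_prod card_option !card_ord.
  have nb := @nat_bound T K T2 Kle.
  have Tp : (0 : R) < T%:R by rewrite ltr0n; apply: leq_trans T2.
  have h : ((T.+1 * K.+1)%N%:R * 2 : R) <= T%:R ^+ 7.
    by rewrite -natrX -(natrM _ _ 2) ler_nat.
  rewrite -(mulr_natr (2 / T%:R ^+ 8)).
  rewrite (_ : 2 / T%:R ^+ 8 * (T.+1 * K.+1)%N%:R = ((T.+1 * K.+1)%N%:R * 2) / T%:R ^+ 8); last by rewrite mulrC mulrA.
  rewrite ler_pdivrMr ?exprn_gt0 //.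
  rewrite (_ : T%:R^-1 * T%:R ^+ 8 = T%:R ^+ 7) //.
  by field; rewrite lt0r_neq0.
apply: (@le_trans _ _ (iid_prob q (fun f => ~~ bad f))); last first.
  apply: (@iid_prob_sub _ _ _ _ hq0) => f nb; have := stepA f nb; exact.
rewrite (@iid_prob_compl _ _ _ _ hq1 (fun f => ~~ bad f)) lerD2l lerN2.
apply: le_trans stepB.
by apply: (@iid_prob_sub _ _ _ _ hq0) => f; rewrite negbK.
Qed.

End Main.

Theorem mainTheorem10 (R : realType) (AL : finType) (nf K N T : nat)
  (u : 'I_K -> AL -> 'I_nf.+1 -> R)
  (q : 'I_K -> R)
  (xb : 'I_K -> AL -> R) (ab : 'I_K -> 'I_nf.+1)
  (lam : {ffun 'I_K -> bool} -> 'I_K -> R)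
  (xs : nat -> AL -> R) :
  (forall i al af, 0 <= u i al af <= 1) ->
  (forall i, 0 <= q i) -> \sum_(i < K) q i = 1 ->
  (forall i, is_mixed (xb i)) ->
  (* barycentric spanner B = {b^(i) = 1_(sigma^(xb i) = ab i)} of W *)
  (forall x af, is_mixed x ->
     (forall i, -1 <= lam (ind_vec u x af) i <= 1) /\
     (forall j, ((ind_vec u x af j : nat)%:R : R) =
        \sum_(i < K) lam (ind_vec u x af) i * ((ind_vec u (xb i) (ab i) j : nat)%:R))) ->
  (0 < N)%N -> (K * N <= T)%N ->
  (forall t, is_mixed (xs t)) ->
  let phat_b (f : {ffun 'I_K * 'I_N -> 'I_K}) (i : 'I_K) : R :=
    N%:R^-1 * \sum_(tau < N)
      ((best_resp (u (f (i, tau))) (xb i) == ab i : nat)%:R) in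
  let phat f (w : {ffun 'I_K -> bool}) : R := \sum_(i < K) lam w i * phat_b f i in
  let p (w : {ffun 'I_K -> bool}) : R := \sum_(i < K) (w i : nat)%:R * q i in
  iid_prob q (fun f =>
    \sum_((K * N).+1 <= t < T.+1) \sum_(af : 'I_nf.+1)
        `|phat f (ind_vec u (xs t) af) - p (ind_vec u (xs t) af)|
      <= 2 * (nf.+1)%:R * T%:R * Num.sqrt (K%:R * ln (T%:R : R) / N%:R))
  >= 1 - T%:R^-1.
Proof.
move=> hu hq0 hq1 hxb hlam N0 KNT hxs.
exact: main_aux.
Qed.
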